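(* The weak Krull dimension of $\mathcal{S}'(\mathbb{Z}^{d})$ is $1$: finitely generated proper prime ideals of $\mathcal{S}'(\mathbb{Z}^{d})$ exist, and if $\mathfrak{p}_1\subseteq\mathfrak{p}_2$ are finitely generated proper prime ideals of $\mathcal{S}'(\mathbb{Z}^{d})$, then $\mathfrak{p}_1=\mathfrak{p}_2$ (so every chain of distinct finitely generated proper prime ideals consists of exactly one ideal).
   Context: For $\mathbf{n}=(n_1,\dots,n_d)\in\mathbb{Z}^d$ write $\|\mathbf{n}\|:=|n_1|+\cdots+|n_d|$. $\mathcal{S}'(\mathbb{Z}^{d})$ denotes the set of all maps $f:\mathbb{Z}^d\to\mathbb{C}$ of at most polynomial growth, i.e. for which there exist a real $M>0$ and an integer $m\geq 0$ with $|f(\mathbf{n})|\leq M(1+\|\mathbf{n}\|)^m$ for all $\mathbf{n}\in\mathbb{Z}^d$. It is a commutative unital ring under pointwise addition and multiplication. The weak Krull dimension of a commutative ring is the supremum of the lengths of chains of distinct proper finitely generated prime ideals, where (as in the paper) the length of a chain is counted as the number of ideals in it. *)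

(* Defs.v *)
From HB Require Import structures.
From mathcomp Require Import all_boot all_order all_algebra.
From mathcomp Require Import reals complex.
Set Implicit Arguments. Unset Strict Implicit. Unset Printing Implicit Defensive.
Import Order.TTheory GRing.Theory Num.Theory.
Local Open Scope ring_scope.

Definition Zd (d : nat) := 'I_d -> int.

Definition l1norm (d : nat) (n : Zd d) : nat := (\sum_(i < d) `|n i|%N)%N.

Definition cabs (R : realType) (z : R[i]) : R := Normc.normc z.

Definition Sprime (R : realType) (d : nat) (f : Zd d -> R[i]) : Prop :=
  exists (M : R) (m : nat), 0 < M /\
    forall n : Zd d, cabs (f n) <= M * (1 + (l1norm n)%:R) ^+ m.

Definition fadd (R : realType) d (f g : Zd d -> R[i]) : Zd d -> R[i] :=
  fun n => f n + g n.
Definition fmul (R : realType) d (f g : Zd d -> R[i]) : Zd d -> R[i] :=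
  fun n => f n * g n.

Definition is_ideal (R : realType) d (I : (Zd d -> R[i]) -> Prop) : Prop :=
  [/\ (forall f, I f -> Sprime f),
      I (fun _ => 0),
      (forall f g, I f -> I g -> I (fadd f g)) &
      (forall a f, Sprime a -> I f -> I (fmul a f))].

Definition is_proper (R : realType) d (I : (Zd d -> R[i]) -> Prop) : Prop :=
  exists f, Sprime f /\ ~ I f.

Definition is_prime_ideal (R : realType) d (I : (Zd d -> R[i]) -> Prop) : Prop :=
  [/\ is_ideal I, is_proper I &
      forall f g, Sprime f -> Sprime g -> I (fmul f g) -> I f \/ I g].

Definition is_fg (R : realType) d (I : (Zd d -> R[i]) -> Prop) : Prop :=
  exists gs : seq (Zd d -> R[i]),
    (forall i : 'I_(size gs), Sprime (nth (fun _ => 0) gs i)) /\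
    forall f, I f <->
      exists a : 'I_(size gs) -> (Zd d -> R[i]),
        (forall i, Sprime (a i)) /\
        f = (fun n => \sum_(i < size gs) a i n * nth (fun _ => 0) gs i n).

Definition fg_proper_prime (R : realType) d (I : (Zd d -> R[i]) -> Prop) : Prop :=
  is_prime_ideal I /\ is_fg I.

(* Main.v *)
Require Import Defs.
From HB Require Import structures.
From mathcomp Require Import all_boot all_order all_algebra.
From mathcomp Require Import reals complex.
From mathcomp Require Import ring lra.
From Stdlib Require Import FunctionalExtensionality Classical PropExtensionality.
Set Implicit Arguments. Unset Strict Implicit. Unset Printing Implicit Defensive.
Import Order.TTheory GRing.Theory Num.Theory.
Local Open Scope ring_scope.
Local Open Scope complex_scope.

Section S.
Variable R : realType.

Implicit Types (z x y : R[i]).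

Lemma normC_cabs x : `|x| = (cabs x)%:C.
Proof. by []. Qed.

Lemma cabs_ge0 x : 0 <= cabs x.
Proof. by rewrite -lecR -normC_cabs normr_ge0. Qed.

Lemma cabsM x y : cabs (x * y) = cabs x * cabs y.
Proof. exact: Normc.normcM. Qed.

Lemma cabsD x y : cabs (x + y) <= cabs x + cabs y.
Proof. by rewrite -lecR rmorphD /= -!normC_cabs ler_normD. Qed.

Lemma cabs0 : cabs (0 : R[i]) = 0.
Proof. exact: Normc.normc0. Qed.

Lemma cabs_eq0 x : (cabs x == 0) = (x == 0).
Proof.
apply/eqP/eqP; first exact: Normc.eq0_normc.
by move=> ->; rewrite cabs0.
Qed.

Lemma cabsR (r : R) : cabs r%:C = `|r|.
Proof. by rewrite /cabs /Normc.normc /= expr0n /= addr0 sqrtr_sqr. Qed.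

Lemma cabs_norm x : cabs `|x| = cabs x.
Proof. by rewrite normC_cabs cabsR ger0_norm // cabs_ge0. Qed.
End S.

Section T.
Variable R : realType.
Variable d : nat.
Local Notation F := (Zd d -> R[i]).
Implicit Types (f g h : F).

Definition w (n : Zd d) : R := 1 + (l1norm n)%:R.

Lemma w_ge1 n : 1 <= w n.
Proof. by rewrite /w lerDl. Qed.

Lemma wX_ge1 n m : 1 <= w n ^+ m.
Proof. exact: exprn_ege1 (w_ge1 n). Qed.

Lemma wX_le n m k : (m <= k)%N -> w n ^+ m <= w n ^+ k.
Proof. by move=> mk; apply: ler_weXn2l => //; exact: w_ge1. Qed.

Lemma Sprime_dom h f : Sprime h -> (forall n, cabs (f n) <= cabs (h n)) -> Sprime f.
Proof.
move=> [M [m [M0 HM]]] H; exists M, m; split => // n.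
exact: le_trans (H n) (HM n).
Qed.

Lemma Sprime_const (c : R[i]) : Sprime (fun _ : Zd d => c).
Proof.
exists (cabs c + 1), 0%N; split; first by have := cabs_ge0 c; lra.
by move=> n; rewrite expr0 mulr1; have := cabs_ge0 c; lra.
Qed.

Lemma Sprime_mul f g : Sprime f -> Sprime g -> Sprime (fun n => f n * g n).
Proof.
move=> [M1 [m1 [M10 H1]]] [M2 [m2 [M20 H2]]].
exists (M1 * M2), (m1 + m2)%N; split; first exact: mulr_gt0.
move=> n; rewrite cabsM exprD mulrACA.
apply: ler_pM; [exact: cabs_ge0 | exact: cabs_ge0 | exact: H1 | exact: H2].
Qed.

Lemma Sprime_add f g : Sprime f -> Sprime g -> Sprime (fun n => f n + g n).
Proof.
move=> [M1 [m1 [M10 H1]]] [M2 [m2 [M20 H2]]].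
exists (M1 + M2), (m1 + m2)%N; split; first exact: addr_gt0.
move=> n; apply: le_trans (cabsD _ _) _; rewrite mulrDl.
apply: lerD.
  apply: le_trans (H1 n) _; apply: ler_wpM2l; first exact: ltW.
  by apply: wX_le; rewrite leq_addr.
apply: le_trans (H2 n) _; apply: ler_wpM2l; first exact: ltW.
by apply: wX_le; rewrite leq_addl.
Qed.

Lemma Sprime_sum k (G : 'I_k -> F) :
  (forall i, Sprime (G i)) -> Sprime (fun n => \sum_(i < k) G i n).
Proof.
elim: k G => [|k IH] G HG.
  have -> : (fun n => \sum_(i < 0) G i n) = (fun _ => 0).
    by apply: functional_extensionality => n; rewrite big_ord0.
  exact: Sprime_const.
have -> : (fun n => \sum_(i < k.+1) G i n) =
  (fun n => \sum_(i < k) G (widen_ord (leqnSn k) i) n + G ord_max n).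
  by apply: functional_extensionality => n; rewrite big_ord_recr.
apply: Sprime_add; last exact: HG.
exact: (IH (fun i => G (widen_ord (leqnSn k) i))).
Qed.

Lemma Sprime_cabs f : Sprime f -> Sprime (fun n => (cabs (f n))%:C).
Proof. by move=> Hf; apply: Sprime_dom Hf _ => n; rewrite cabsR ger0_norm ?cabs_ge0. Qed.

End T.

Lemma cabs_sum (R : realType) k (G : 'I_k -> R[i]) :
  cabs (\sum_(i < k) G i) <= \sum_(i < k) cabs (G i).
Proof.
rewrite -lecR rmorph_sum /=.
have := @ler_norm_sum R[i] R[i] _ (index_enum 'I_k) G xpredT.
rewrite normC_cabs => H; apply: le_trans H _.
apply: ler_sum => i _; by rewrite normC_cabs.
Qed.

Lemma le_sum1 (R : realType) k (G : 'I_k -> R) j :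
  (forall i, 0 <= G i) -> G j <= \sum_(i < k) G i.
Proof.
move=> H; rewrite (bigD1 j) //= lerDl; apply: sumr_ge0 => i _; exact: H.
Qed.

Section Main.
Variable R : realType.
Variable d : nat.
Local Notation F := (Zd d -> R[i]).
Variable gs : seq F.
Local Notation k := (size gs).
Local Notation g i := (nth (fun _ => 0) gs i).
Hypothesis Hg : forall i : 'I_k, Sprime (g i).
Variable p : F -> Prop.
Hypothesis Hrep : forall f, p f <-> exists a : 'I_k -> F,
  (forall i, Sprime (a i)) /\ f = (fun n => \sum_(i < k) a i n * g i n).
Hypothesis Hprime : forall f g, Sprime f -> Sprime g -> p (fmul f g) -> p f \/ p g.

Definition Zs (n : Zd d) := forall i : 'I_k, g i n = 0.

Lemma LA f : p f -> forall n, Zs n -> f n = 0.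
Proof.
move=> /Hrep [a [_ ->]] n Zn; apply: big1 => i _; by rewrite Zn mulr0.
Qed.

Definition u (i : 'I_k) n : R[i] := conjc (g i n) / `|g i n|.

Lemma u_g i n : u i n * g i n = `|g i n|.
Proof.
rewrite /u; have [->|g0] := eqVneq (g i n) 0; first by rewrite normr0 !mulr0.
rewrite mulrAC -[conjc _ * _]mulrC -sqr_normc expr2 -mulrA divff ?mulr1 //.
by rewrite normr_eq0.
Qed.

Lemma cabs_u i n : cabs (u i n) <= 1.
Proof.
rewrite -lecR -normC_cabs /u normrM normcJ normfV normr_id rmorph1.
have [->|g0] := eqVneq (g i n) 0; first by rewrite normr0 mul0r ler01.
by rewrite divff ?normr_eq0.
Qed.

Lemma Sprime_u i : Sprime (u i).
Proof.
apply: Sprime_dom (Sprime_const d (1 : R[i])) _ => n.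
have -> : cabs (1 : R[i]) = 1 by exact: Normc.normc1.
exact: cabs_u.
Qed.

Definition GR n : R := \sum_(i < k) cabs (g i n).
Definition G n : R[i] := (GR n)%:C.

Lemma GR_ge0 n : 0 <= GR n.
Proof. by apply: sumr_ge0 => i _; exact: cabs_ge0. Qed.

Lemma G_sum n : G n = \sum_(i < k) u i n * g i n.
Proof.
rewrite /G /GR rmorph_sum /=; apply: eq_bigr => i _.
by rewrite u_g normC_cabs.
Qed.

Lemma Sprime_G : Sprime G.
Proof.
have -> : G = (fun n => \sum_(i < k) u i n * g i n).
  by apply: functional_extensionality => n; rewrite G_sum.
by apply: Sprime_sum => i; apply: Sprime_mul; [exact: Sprime_u | exact: Hg].
Qed.

Lemma pG : p G.
Proof.
apply/Hrep; exists u; split; first exact: Sprime_u.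
by apply: functional_extensionality => n; rewrite G_sum.
Qed.

Lemma GR0 n : GR n = 0 -> Zs n.
Proof.
move=> /eqP; rewrite psumr_eq0 => [/allP H i|i _]; last exact: cabs_ge0.
apply/eqP; rewrite -cabs_eq0; apply: H; exact: mem_index_enum.
Qed.

Definition s n := sqrtc (G n).

Lemma s_sq n : cabs (s n) ^+ 2 = GR n.
Proof.
by rewrite expr2 -cabsM -expr2 sqr_sqrtc /G cabsR ger0_norm // GR_ge0.
Qed.

Lemma Sprime_s : Sprime s.
Proof.
apply: Sprime_dom (Sprime_add (Sprime_const d 1) Sprime_G) _ => n.
have -> : (1 : R[i]) + G n = (1 + GR n)%:C by rewrite rmorphD rmorph1.
rewrite cabsR ger0_norm; last by have := GR_ge0 n; lra.
rewrite -s_sq; have := cabs_ge0 (s n); nra.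
Qed.

Lemma ps : p s.
Proof.
have H : p (fmul s s).
  suff -> : fmul s s = G by exact: pG.
  by apply: functional_extensionality => n; rewrite /fmul -expr2 sqr_sqrtc.
by case: (Hprime Sprime_s Sprime_s H).
Qed.

Lemma bound : exists AR : Zd d -> R,
  [/\ Sprime (fun n => (AR n)%:C), (forall n, 0 <= AR n) &
      (forall n, GR n != 0 -> 1 <= AR n ^+ 2 * GR n)].
Proof.
have [a [Ha Hs]] := (proj1 (Hrep s)) ps.
exists (fun n => \sum_(i < k) cabs (a i n)); split.
- have -> : (fun n => (\sum_(i < k) cabs (a i n))%:C) =
            (fun n => \sum_(i < k) (cabs (a i n))%:C).
    by apply: functional_extensionality => n; rewrite rmorph_sum.
  by apply: Sprime_sum => i; apply: Sprime_cabs.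
- by move=> n; apply: sumr_ge0 => i _; exact: cabs_ge0.
move=> n Gn0.
set A := \sum_(i < k) cabs (a i n).
have A0 : 0 <= A by apply: sumr_ge0 => i _; exact: cabs_ge0.
have Hle : cabs (s n) <= A * GR n.
  have -> : s n = \sum_(i < k) a i n * g i n by rewrite Hs.
  apply: le_trans (cabs_sum _) _.
  rewrite /GR mulr_sumr; apply: ler_sum => i _; rewrite cabsM.
  apply: ler_wpM2r; first exact: cabs_ge0.
  rewrite /A; apply: (@le_sum1 R k (fun j => cabs (a j n))) => j; exact: cabs_ge0.
have Gp : 0 < GR n by rewrite lt_def Gn0 GR_ge0.
have sq := s_sq n.
have c0 := cabs_ge0 (s n).
have H2 : cabs (s n) ^+ 2 <= (A * GR n) ^+ 2.
  rewrite !expr2; apply: ler_pM => //.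
rewrite sq exprMn in H2.
have : GR n * 1 <= GR n * (A ^+ 2 * GR n).
  by rewrite mulr1 mulrCA -expr2.
by rewrite ler_pM2l.
Qed.

Lemma LB f : Sprime f -> (forall n, Zs n -> f n = 0) -> p f.
Proof.
move=> Hf Hz.
have [AR [HA A0 HAG]] := bound.
pose c n := f n / G n.
have Hc : Sprime c.
  apply: Sprime_dom (Sprime_mul (Sprime_mul Hf HA) HA) _ => n.
  rewrite (@cabsM R (f n * _)) (@cabsM R (f n)) (@cabsR R) ger0_norm //.
  have [G0|G0] := eqVneq (GR n) 0.
    have -> : c n = 0 by rewrite /c /G G0 rmorph0 invr0 mulr0.
    rewrite (@cabs0 R).
    by apply: mulr_ge0; [apply: mulr_ge0|]; rewrite ?cabs_ge0.
  rewrite /c (@cabsM R (f n)) -mulrA; apply: ler_wpM2l; first exact: cabs_ge0.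
  rewrite /G -(rmorphV (real_complex R)) ?unitfE // (@cabsR R) ger0_norm; last first.
    by rewrite invr_ge0 GR_ge0.
  have Gp : 0 < GR n by rewrite lt_def G0 GR_ge0.
  rewrite -[X in X <= _]mul1r ler_pdivrMr // -expr2; exact: HAG.
apply/Hrep; exists (fun i n => c n * u i n); split.
  by move=> i; apply: Sprime_mul => //; exact: Sprime_u.
apply: functional_extensionality => n.
under eq_bigr do rewrite -mulrA.
rewrite -mulr_sumr -G_sum /c.
have [G0|G0] := eqVneq (GR n) 0.
  by rewrite (Hz n (GR0 G0)) !mul0r.
by rewrite divfK // /G -(rmorph0 (real_complex R)) (inj_eq (@complexI R)).
Qed.
End Main.

Section Final.
Variable R : realType.
Variable d : nat.
Local Notation F := (Zd d -> R[i]).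

Definition delta (z : Zd d) (n : Zd d) : R[i] :=
  if [forall i, n i == z i] then 1 else 0.
Definition e (z : Zd d) (n : Zd d) : R[i] := 1 + (-1) * delta z n.
Definition Iz (z : Zd d) : F -> Prop := fun f => Sprime f /\ f z = 0.

Lemma forall_eq (n z : Zd d) : [forall i, n i == z i] -> n = z.
Proof.
by move=> /forallP H; apply: functional_extensionality => i; apply/eqP; exact: H.
Qed.

Lemma delta_zz z : delta z z = 1.
Proof. by rewrite /delta; case: ifP => // /negP []; apply/forallP => i. Qed.

Lemma e_zz z : e z z = 0.
Proof. by rewrite /e delta_zz mulr1 subrr. Qed.

Lemma e0 z n : e z n = 0 -> n = z.
Proof.
rewrite /e /delta; case: ifP => [H _|_]; first exact: forall_eq.
by rewrite mulr0 addr0 => /eqP; rewrite oner_eq0.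
Qed.

Lemma fe f z n : f z = 0 -> f n * e z n = f n.
Proof.
move=> fz; rewrite /e /delta; case: ifP => [/forall_eq ->|_].
  by rewrite fz mul0r.
by rewrite mulr0 addr0 mulr1.
Qed.

Lemma delta_e z n : delta z n * e z n = 0.
Proof.
by rewrite /e /delta; case: ifP => _; rewrite ?mul0r // mulr1 mul1r subrr.
Qed.

Lemma Sprime_delta z : Sprime (delta z).
Proof.
apply: Sprime_dom (Sprime_const d (1 : R[i])) _ => n.
rewrite /delta; case: ifP => _ //; rewrite (@cabs0 R); exact: cabs_ge0.
Qed.

Lemma Sprime_e z : Sprime (e z).
Proof.
apply: Sprime_add; first exact: Sprime_const.
apply: Sprime_mul; [exact: Sprime_const | exact: Sprime_delta].
Qed.

Lemma Iz_fgpp z : fg_proper_prime (Iz z).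
Proof.
split; first split.
- split.
  + by move=> f [].
  + by split; [exact: Sprime_const|].
  + move=> f g [Sf fz] [Sg gz]; split; first exact: Sprime_add.
    by rewrite /fadd fz gz addr0.
  + move=> a f Sa [Sf fz]; split; first exact: Sprime_mul.
    by rewrite /fmul fz mulr0.
- exists (fun _ => 1); split; first exact: Sprime_const.
  by move=> [_ /eqP]; rewrite oner_eq0.
- move=> f g Sf Sg [_ /eqP]; rewrite /fmul mulf_eq0 => /orP [/eqP fz|/eqP gz].
    by left.
  by right.
exists [:: e z]; split.
  by case=> [[|]] //= _; exact: Sprime_e.
move=> f; split.
  move=> [Sf fz]; exists (fun _ => f); split => // .
  apply: functional_extensionality => n; rewrite big_ord1 /=.
  by rewrite fe.
move=> [a [Sa ->]]; split.
  apply: Sprime_sum => i; apply: Sprime_mul => //.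
  by case: i => [[|]] //= _; exact: Sprime_e.
by rewrite big_ord1 /= e_zz mulr0.
Qed.
End Final.

Lemma classify (R : realType) (d : nat) (p : (Zd d -> R[i]) -> Prop) :
  fg_proper_prime p -> exists z, forall f, p f <-> Iz z f.
Proof.
move=> [[Hid [f0 [Sf0 nf0]] Hprime] [gs [Hg Hrep]]].
have [z Zz] : exists z, Zs gs z.
  apply: NNPP => H; apply: nf0; apply: (LB Hg Hrep Hprime Sf0) => n Zn.
  by exfalso; apply: H; exists n.
exists z => f; split.
  move=> pf; split; first by case: Hid => H _ _ _; exact: H.
  exact: (LA Hrep pf Zz).
move=> [Sf fz]; apply: (LB Hg Hrep Hprime Sf) => n Zn.
suff -> : n = z by [].
have p0 : p (fmul (@delta R d z) (@e R d z)).
  suff -> : fmul (@delta R d z) (@e R d z) = (fun _ => 0) by case: Hid.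
  by apply: functional_extensionality => m; rewrite /fmul delta_e.
case: (Hprime _ _ (@Sprime_delta R d z) (@Sprime_e R d z) p0) => H.
  have := LA Hrep H Zz; rewrite delta_zz => /eqP; by rewrite oner_eq0.
exact: e0 (LA Hrep H Zn).
Qed.

Theorem theorem4p6 (R : realType) (d : nat) :
  (exists p : (Zd d -> R[i]) -> Prop, fg_proper_prime p) /\
  (forall p1 p2 : (Zd d -> R[i]) -> Prop,
     fg_proper_prime p1 -> fg_proper_prime p2 ->
     (forall f, p1 f -> p2 f) -> p1 = p2).
Proof.
split; first by exists (@Iz R d (fun _ => 0)); exact: Iz_fgpp.
move=> p1 p2 H1 H2 sub.
have [z1 E1] := classify H1; have [z2 E2] := classify H2.
have ez : z2 = z1.
  have : p1 (@e R d z1) by apply/E1; split; [exact: Sprime_e | exact: e_zz].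
  move=> /sub /E2 [_ H]; exact: e0 H.
apply: functional_extensionality => f; apply: propositional_extensionality.
by rewrite E1 E2 ez.
Qed.
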